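(* Let $N$ be a unary nfa in Chrobak normal form accepting the language $L\subseteq\{a\}^*$. Then $\mathrm{nsyn}(L)\le|N|$, the number of states of $N$.
   Context: A unary nfa is in Chrobak normal form if it has a single initial state $q_0$, its states consist of a path $q_0\xrightarrow{a}q_1\xrightarrow{a}\cdots\xrightarrow{a}q_m$ together with pairwise disjoint cycles $p_{i,0}\xrightarrow{a}p_{i,1}\xrightarrow{a}\cdots\xrightarrow{a}p_{i,\ell_i-1}\xrightarrow{a}p_{i,0}$ ($i=1,\ldots,k$), and the only further transitions are $q_m\xrightarrow{a}p_{i,0}$ for each $i$ (so $q_m$ is the only state that may have several successors); final states are arbitrary. $\mathrm{nsyn}(L)$ is the least number of states of a subatomic nfa accepting $L$, i.e. an nfa (several initial states allowed) all of whose states accept languages in the boolean algebra generated by the two-sided derivatives $u^{-1}Lv^{-1}=\{w:uwv\in L\}$. *)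

(* Defs.v *)
(* Unary alphabet {a}: the word a^n is represented by n : nat,
   concatenation of words is addition. *)
From mathcomp Require Import all_boot.
Set Implicit Arguments. Unset Strict Implicit. Unset Printing Implicit Defensive.

Definition lang := nat -> Prop.

Record nfa := NFA {
  st : finType;
  tr : st -> st -> bool;
  ini : pred st;
  fin : pred st }.

Fixpoint acc (A : nfa) (n : nat) (q : st A) : bool :=
  if n is n'.+1 then [exists q', tr q q' && acc n' q'] else fin q.

Definition state_lang (A : nfa) (q : st A) : lang := fun n => acc n q.

Definition nfa_lang (A : nfa) : lang := fun n => exists q : st A, ini q && acc n q.

Definition nstates (A : nfa) : nat := #|st A|.

(* two-sided derivative  u^{-1} L v^{-1} = { w | u w v \in L } *)
Definition dquot (L : lang) (u v : nat) : lang := fun w => L (u + w + v).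

Inductive in_BA (G : lang -> Prop) : lang -> Prop :=
| BA_gen : forall K, G K -> in_BA G K
| BA_empty : in_BA G (fun _ => False)
| BA_compl : forall K, in_BA G K -> in_BA G (fun w => ~ K w)
| BA_union : forall K1 K2, in_BA G K1 -> in_BA G K2 ->
               in_BA G (fun w => K1 w \/ K2 w)
| BA_ext : forall K1 K2, in_BA G K1 -> (forall w, K1 w <-> K2 w) -> in_BA G K2.

Definition derivs (L : lang) : lang -> Prop :=
  fun K => exists u v, forall w, K w <-> dquot L u v w.

Definition subatomic (L : lang) (A : nfa) : Prop :=
  forall q : st A, in_BA (derivs L) (state_lang q).

(* nsyn(L) <= n  : some subatomic nfa with at most n states accepts L *)
Definition nsyn_le (L : lang) (n : nat) : Prop :=
  exists A : nfa, subatomic L A /\ nstates A <= n /\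
                  forall w, nfa_lang A w <-> L w.

(* Chrobak normal form.  States of the canonical shape: path q_0..q_m
   (inl i, i : 'I_m.+1) and cycles p_{c,j} (inr (c, j), j : 'I_(l c)). *)
Definition chrobak_states (m k : nat) (l : 'I_k -> nat) : finType :=
  ('I_m.+1 + {c : 'I_k & 'I_(l c)})%type.

Definition chrobak_tr (m k : nat) (l : 'I_k -> nat)
    (p q : chrobak_states m l) : bool :=
  match p, q with
  | inl i, inl j => (i < m) && (val j == (val i).+1)
  | inl i, inr cj => (val i == m) && (val (tagged cj) == 0)
  | inr _, inl _ => false
  | inr ci, inr cj =>
      (tag ci == tag cj) && (val (tagged cj) == (val (tagged ci)).+1 %% l (tag ci))
  end.

Definition chrobak_nf (N : nfa) : Prop :=
  exists (m k : nat) (l : 'I_k -> nat) (f : st N -> chrobak_states m l),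
    [/\ forall c, 0 < l c,
        bijective f,
        forall p q, tr p q = chrobak_tr (f p) (f q) &
        forall q, ini q = (f q == inl ord0)].

(* Main.v *)
Require Import Defs.
From mathcomp Require Import all_boot zify.
From Stdlib Require Import Classical.
Set Implicit Arguments. Unset Strict Implicit. Unset Printing Implicit Defensive.

Fixpoint cacc (m k : nat) (l : 'I_k -> nat) (g : chrobak_states m l -> bool)
  (n : nat) (p : chrobak_states m l) : bool :=
  if n is n'.+1 then [exists p', chrobak_tr p p' && cacc g n' p'] else g p.

Lemma transfer (m k : nat) (l : 'I_k -> nat) (g : chrobak_states m l -> bool)
  (S : finType) (t : S -> S -> bool) (i fn : pred S) (f : S -> chrobak_states m l) :
  bijective f -> (forall p q, t p q = chrobak_tr (f p) (f q)) ->
  (forall q, fn q = g (f q)) ->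
  forall n q, @acc (NFA t i fn) n q = cacc g n (f q).
Proof.
move=> [h fK hK] Ht Hf; elim=> [|n IH] q /=; first exact: Hf.
apply/existsP/existsP => [[q' /andP[H1 H2]]|[p' /andP[H1 H2]]].
  by exists (f q'); rewrite -Ht H1 -IH.
by exists (h p'); rewrite Ht hK H1 IH hK.
Qed.

Lemma cacc_cyc (m k : nat) (l : 'I_k -> nat) (lpos : forall c, 0 < l c)
  (g : chrobak_states m l -> bool) n (cj : {c : 'I_k & 'I_(l c)}) :
  cacc g n (inr cj) = [exists cj' : {c : 'I_k & 'I_(l c)},
    [&& tag cj' == tag cj, val (tagged cj') == (val (tagged cj) + n) %% l (tag cj)
     & g (inr cj')]].
Proof.
elim: n cj => [|n IH] [c j] /=.
  apply/idP/existsP => [H|[[c' j'] /and3P[/= /eqP E1]]].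
    by exists (Tagged (fun c => 'I_(l c)) j); rewrite /= eqxx addn0 modn_small ?ltn_ord ?eqxx.
  subst c'; rewrite addn0 modn_small ?ltn_ord // => /eqP E2.
  by have -> : j' = j by apply: val_inj.
apply/existsP/existsP => [[p' /andP[H1 H2]]|[[c' j'] /and3P[/= /eqP E1 E2 E3]]].
  case: p' H1 H2 => [i|[c2 j2]] //= /andP[/eqP E1 /eqP E2].
  subst c2; rewrite IH => /existsP[[c3 j3] /and3P[/= /eqP E3 /eqP E4 E5]].
  subst c3; exists (Tagged (fun c => 'I_(l c)) j3); rewrite /= eqxx E5 E4 E2 /= andbT.
  by rewrite modnDml addSnnS.
subst c'.
have lt : (val j).+1 %% l c < l c by rewrite ltn_pmod.
exists (inr (Tagged (fun c => 'I_(l c)) (Ordinal lt))); rewrite /= !eqxx /= IH.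
apply/existsP; exists (Tagged (fun c => 'I_(l c)) j'); rewrite /= eqxx E3 andbT.
by rewrite modnDml addSnnS.
Qed.

Lemma cacc_path (m k : nat) (l : 'I_k -> nat) (lpos : forall c, 0 < l c)
  (g : chrobak_states m l -> bool) n (i : 'I_m.+1) :
  cacc g n (inl i) = if i + n <= m then
     [exists i' : 'I_m.+1, (val i' == i + n) && g (inl i')]
  else [exists cj : {c : 'I_k & 'I_(l c)},
          (val (tagged cj) == (i + n - m.+1) %% l (tag cj)) && g (inr cj)].
Proof.
elim: n i => [|n IH] i /=.
  rewrite addn0 -ltnS ltn_ord; apply/idP/existsP => [H|[i' /andP[/eqP E H]]].
    by exists i; rewrite eqxx.
  by have <- : i' = i by apply: val_inj.
apply/existsP/idP => [[p' /andP[H1 H2]]|].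
  case: p' H1 H2 => [i2|cj] /=.
    case/andP=> [Him /eqP E]; rewrite IH E addSnnS; by [].
  case/andP=> [/eqP Em /eqP E0]; rewrite cacc_cyc // => /existsP[cj' /and3P[/eqP E1 /eqP E2 E3]].
  rewrite Em addnS ltnNge leq_addr /=; apply/existsP; exists cj'.
  have E0' : \val (tagged cj) = 0 := E0. rewrite E3 E2 E1 E0' add0n -addSn addKn eqxx; by [].
case: (ltnP i m) => Him.
  have lt : i.+1 < m.+1 by [].
  move=> H; exists (inl (Ordinal lt)); rewrite /= eqxx /= IH /= addSnnS. exact: H.

have Em : nat_of_ord i = m by apply/eqP; rewrite eqn_leq Him -ltnS ltn_ord.
rewrite Em addnS ltnNge leq_addr /= => /existsP[[c j] /andP[/eqP E H]].
exists (inr (Tagged (fun c => 'I_(l c)) (Ordinal (lpos c)))).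
rewrite /= !eqxx /= cacc_cyc //; apply/existsP.
exists (Tagged (fun c => 'I_(l c)) j); rewrite /= eqxx H andbT.
by move: E; rewrite /= -addSn addKn add0n => ->.
Qed.

Lemma BA_inter G K1 K2 : in_BA G K1 -> in_BA G K2 -> in_BA G (fun w => K1 w /\ K2 w).
Proof.
move=> H1 H2.
apply: (BA_ext (BA_compl (BA_union (BA_compl H1) (BA_compl H2)))) => w.
split; [move=> H; split; apply: NNPP => N; apply: H; tauto | tauto].
Qed.

Lemma BA_bigcap G (D : nat -> lang) P : (forall kk, in_BA G (D kk)) ->
  in_BA G (fun w => forall kk, kk < P -> D kk w).
Proof.
move=> HD; elim: P => [|P IH].
  by apply: (BA_ext (BA_compl (BA_empty G))) => w; split => // _ kk.
apply: (BA_ext (BA_inter IH (HD P))) => w; split.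
  by move=> [H1 H2] kk; rewrite ltnS leq_eqVlt => /orP[/eqP->|/H1].
by move=> H; split => [kk Hk|]; apply: H => //; apply: ltnW.
Qed.

Lemma key (T : nat -> bool) P l r : 0 < l -> 0 < P -> l %| P ->
  (forall y d, T (y + d * P) = T y) ->
  (forall kk, kk < P -> T (r + kk * l)) -> forall kk, T (r + kk * l).
Proof.
move=> lp Pp /dvdnP[Q EP] Tp H kk.
have Qp : 0 < Q by move: Pp; rewrite EP muln_gt0 => /andP[].
have -> : r + kk * l = (r + (kk %% Q) * l) + (kk %/ Q) * P.
  by rewrite EP {1}(divn_eq kk Q); nia.
rewrite Tp; apply: H; apply: (leq_trans (ltn_pmod _ Qp)).
by rewrite EP leq_pmulr.
Qed.

Lemma shift (T : nat -> bool) P l a : 0 < l -> 0 < P -> l %| P ->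
  (forall y d, T (y + d * P) = T y) ->
  (forall kk, T (a + kk * l)) <-> (forall kk, T (a %% l + kk * l)).
Proof.
move=> lp Pp /dvdnP[Q EP] Tp; split => H kk.
  rewrite -(Tp _ (a %/ l)); case: Q EP => [|Q] EP.
    by move: Pp; rewrite EP.
  have -> : a %% l + kk * l + a %/ l * P = a + (kk + a %/ l * Q) * l.
    by rewrite EP {3}(divn_eq a l); nia.
  exact: H.
have -> : a + kk * l = a %% l + (a %/ l + kk) * l by rewrite {1}(divn_eq a l); nia.
exact: H.
Qed.

Theorem mainTheorem16 (N : nfa) (L : lang) :
  chrobak_nf N -> (forall w, nfa_lang N w <-> L w) -> nsyn_le L (nstates N).
Proof.
case: N => S t i fn [m [k [l [f [lpos [fi fK iK] Htr Hini]]]]] HL.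
have {}Hini : forall q, i q = (f q == inl ord0) := Hini.
have {}Htr : forall p q, t p q = chrobak_tr (f p) (f q) := Htr.
pose g := fun p => fn (fi p).
have HN : forall n q, @acc (NFA t i fn) n q = cacc g n (f q).
  by apply: transfer => //; [exists fi | move=> q; rewrite /g fK].
have HLb : forall w, L w <-> cacc g w (inl ord0).
  move=> w; rewrite -HL /nfa_lang /=; split.
    by move=> [q /andP[]]; rewrite Hini HN => /eqP ->.
  by move=> H; exists (fi (inl ord0)); rewrite Hini iK eqxx HN iK.
pose T y := [exists cj : {c : 'I_k & 'I_(l c)},
          (val (tagged cj) == y %% l (tag cj)) && g (inr cj)].
have HT : forall y, cacc g (m.+1 + y) (inl ord0) = T y.
  move=> y; rewrite cacc_path // add0n ltnNge leq_addr /= addKn //.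
pose P := \prod_(c < k) l c.
have Pp : 0 < P by apply: prodn_gt0.
have Hdiv : forall c, l c %| P by move=> c; rewrite /P (bigD1 c) //= dvdn_mulr.
have Tp : forall y d, T (y + d * P) = T y.
  move=> y d; apply/existsP/existsP => [][cj /andP[/eqP E H]]; exists cj;
  rewrite H andbT E; case/dvdnP: (Hdiv (tag cj)) => Q ->;
  by rewrite ?[_ + d * _]addnC mulnA modnMDl.
pose g' := fun p : chrobak_states m l => match p with
  | inl ii => g (inl ii)
  | inr cj => [forall kk : 'I_P, T (val (tagged cj) + kk * l (tag cj))] end.
pose A := NFA t i (fun q => g' (f q)).
have HA : forall n q, @acc A n q = cacc g' n (f q).
  by apply: transfer => //; exists fi.
have H1 : forall n, cacc g' n (inl ord0) = cacc g n (inl ord0).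
  move=> n; rewrite !cacc_path //=; case: ifP => // _.
  set y := _ - _.
  apply/existsP/existsP => [][cj /andP[/eqP E H]].
    have HH : T (val (tagged cj) + y %/ l (tag cj) * l (tag cj)).
      apply: (key (lpos _) Pp (Hdiv _) Tp) => kk Hk.
      by move/forallP: H => /(_ (Ordinal Hk)).
    have E' : val (tagged cj) = y %% l (tag cj) := E.
    move: HH; rewrite E' addnC -divn_eq => /existsP[cj' Hc]; by exists cj'.
  have E' : val (tagged cj) = y %% l (tag cj) := E.
  exists cj; rewrite E eqxx /=; apply/forallP => kk; apply/existsP; exists cj.
  by rewrite H andbT addnC modnMDl E' modn_mod.
exists A; split; [|split => //].
  move=> q; case Ef: (f q) => [ii|[c j]].
    apply: (BA_ext (BA_gen (K := dquot L ii 0) _)); first by exists ii, 0.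
    move=> w; rewrite /state_lang /dquot HA Ef addn0 HLb -H1.
    by rewrite !cacc_path // add0n.
  have Hc : forall w, cacc g' w (inr (Tagged (fun c => 'I_(l c)) j)) <->
      forall kk, T ((val j + w) %% l c + kk * l c).
    move=> w; rewrite cacc_cyc //; split.
      move/existsP => [[c' j'] /and3P[/= /eqP Ec /eqP Ej Hg]]; subst c'.
      rewrite -Ej; apply: (key (lpos _) Pp (Hdiv _) Tp) => kk Hk.
      by move/forallP: Hg => /(_ (Ordinal Hk)).
    move=> H; apply/existsP.
    exists (Tagged (fun c => 'I_(l c)) (Ordinal (ltn_pmod (val j + w) (lpos c)))).
    by rewrite /= !eqxx /=; apply/forallP => kk; apply: H.
  apply: (BA_ext (BA_bigcap
     (D := fun kk => dquot L (m.+1 + val j + kk * l c) 0) P _)).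
    by move=> kk; apply: BA_gen; exists (m.+1 + val j + kk * l c), 0.
  move=> w; rewrite /state_lang HA Ef Hc -(@shift T P (l c) (val j + w) (lpos c) Pp (Hdiv c) Tp); split.
    move=> H; apply: (key (lpos _) Pp (Hdiv _) Tp) => kk Hk.
    move: (H kk Hk); rewrite /dquot HLb addn0 -HT.
    by rewrite (_ : m.+1 + j + kk * l c + w = m.+1 + (j + w + kk * l c)) //; lia.
  move=> H kk Hk; rewrite /dquot HLb addn0.
  by rewrite (_ : m.+1 + j + kk * l c + w = m.+1 + (j + w + kk * l c)) ?HT //; lia.
move=> w; rewrite HLb -H1 /nfa_lang /=; split.
  by move=> [q /andP[]]; rewrite Hini HA => /eqP ->.
by move=> H; exists (fi (inl ord0)); rewrite Hini iK eqxx HA iK.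
Qed.
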